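(* Let $k\ge 2$ and let $a\in A_i$ be an additive agent. Suppose an allocation $(G_1,\dots,G_k)$ is PROP$(k-1)$ for $a$. Then: (a) the allocation is $1/k$-fraction-MMS-fair for $a$; moreover the factor $1/k$ is tight: there exist an additive agent and an allocation among $k$ groups that is EF1 (hence PROP$(k-1)$) for that agent such that the agent's utility is exactly $\frac1k$ of her maximin share $\mathrm{MMS}^k$; (b) the allocation is 1-out-of-$(2k-1)$ MMS-fair for $a$; moreover $2k-1$ is tight: there exist an additive agent and an allocation among $k$ groups that is EF1 (hence PROP$(k-1)$) for that agent but not 1-out-of-$(2k-2)$ MMS-fair for her; (c) if $a$ is binary, the allocation is MMS-fair for $a$; moreover, for a binary agent, MMS-fairness implies PROP$(k-1)$.
   Context: There is a finite set $G$ of goods and $k\ge 2$ groups $A_1,\dots,A_k$ of agents. Each agent $a$ has a utility function $u_a:2^G\to\mathbb{R}_{\ge 0}$; it is additive if $u_a(X)=\sum_{g\in X}u_a(\{g\})$, and binary if additive with $u_a(\{g\})\in\{0,1\}$ for every good $g$. An allocation is a partition $(G_1,\dots,G_k)$ of $G$; group $A_i$ receives $G_i$ and each agent $a\in A_i$ gets $u_a(G_i)$. For an agent $a\in A_i$ and integer $c\ge 0$: the allocation is EF$c$ for $a$ if for every $i'$ there is $C\subseteq G_{i'}$, $|C|\le c$, with $u_a(G_i)\ge u_a(G_{i'}\setminus C)$; it is PROP$c$ for $a$ if there is $C\subseteq G\setminus G_i$, $|C|\le c$, with $u_a(G_i)\ge\frac1k u_a(G\setminus C)$. For an integer $c\ge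 1$, $\mathrm{MMS}^c_a(G)=\max\min(u_a(P_1),\dots,u_a(P_c))$, the maximum over all partitions $(P_1,\dots,P_c)$ of $G$ into $c$ sets. The allocation is MMS-fair for $a$ if $u_a(G_i)\ge \mathrm{MMS}^k_a(G)$; 1-out-of-$c$ MMS-fair for $a$ (for $c\ge k$) if $u_a(G_i)\ge\mathrm{MMS}^c_a(G)$; $q$-fraction-MMS-fair for $a$ if $u_a(G_i)\ge q\,\mathrm{MMS}^k_a(G)$. *)

(* Defs.v *)
From HB Require Import structures.
From mathcomp Require Import all_boot all_order all_algebra.
Set Implicit Arguments. Unset Strict Implicit. Unset Printing Implicit Defensive.
Import Order.TTheory GRing.Theory Num.Theory.
Local Open Scope ring_scope.

(* A partition of the goods G into n (possibly empty) labelled parts is a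
   function assigning each good its part; [bundle P j] is the j-th part. *)
Definition bundle (G : finType) (n : nat) (P : {ffun G -> 'I_n}) (j : 'I_n)
  : {set G} := [set g | P g == j].

Definition nonneg_util (R : realFieldType) (G : finType) (u : {set G} -> R) :=
  forall X : {set G}, 0 <= u X.

Definition additive_util (R : realFieldType) (G : finType) (u : {set G} -> R) :=
  forall X : {set G}, u X = \sum_(g in X) u [set g].

Definition binary_util (R : realFieldType) (G : finType) (u : {set G} -> R) :=
  additive_util u /\ forall g : G, u [set g] = 0 \/ u [set g] = 1.

Definition EFc (R : realFieldType) (G : finType) (k : nat) (u : {set G} -> R)
  (A : {ffun G -> 'I_k}) (i : 'I_k) (c : nat) :=
  forall i' : 'I_k, exists C : {set G},
    [/\ C \subset bundle A i', (#|C| <= c)%N & u (bundle A i' :\: C) <= u (bundle A i)].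

Definition PROPc (R : realFieldType) (G : finType) (k : nat) (u : {set G} -> R)
  (A : {ffun G -> 'I_k}) (i : 'I_k) (c : nat) :=
  exists C : {set G},
    [/\ C \subset ~: bundle A i, (#|C| <= c)%N &
        k%:R^-1 * u (~: C) <= u (bundle A i)].

(* min over the c parts of a partition (the identity element u setT is an upper
   bound of every part for nonnegative additive_util u, and c >= 1 in all uses). *)
Definition part_min (R : realFieldType) (G : finType) (c : nat) (u : {set G} -> R)
  (P : {ffun G -> 'I_c}) : R :=
  \big[Num.min/u setT]_(j < c) u (bundle P j).

(* MMS^c_a(G): max over all partitions of G into c sets of the min part value.
   (identity element 0 is below every value for nonnegative u.) *)
Definition MMS (R : realFieldType) (G : finType) (c : nat) (u : {set G} -> R) : R :=
  \big[Num.max/0]_(P : {ffun G -> 'I_c}) part_min u P.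

Definition MMS_fair (R : realFieldType) (G : finType) (k : nat) (u : {set G} -> R)
  (A : {ffun G -> 'I_k}) (i : 'I_k) := MMS k u <= u (bundle A i).

Definition one_out_of_MMS_fair (R : realFieldType) (G : finType) (k : nat)
  (u : {set G} -> R) (A : {ffun G -> 'I_k}) (i : 'I_k) (c : nat) :=
  MMS c u <= u (bundle A i).

Definition frac_MMS_fair (R : realFieldType) (G : finType) (k : nat)
  (u : {set G} -> R) (A : {ffun G -> 'I_k}) (i : 'I_k) (q : R) :=
  q * MMS k u <= u (bundle A i).

(* Main.v *)
Require Import Defs.
From HB Require Import structures.
From mathcomp Require Import all_boot all_order all_algebra.
From mathcomp Require Import zify ring lra.
Set Implicit Arguments. Unset Strict Implicit. Unset Printing Implicit Defensive.
Import Order.TTheory GRing.Theory Num.Theory.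
Local Open Scope ring_scope.

Lemma u_split (R : realFieldType) (G : finType) (u : {set G} -> R)
  (ad : additive_util u) (A B : {set G}) :
  u A = u (A :&: B) + u (A :\: B).
Proof. by rewrite !ad (big_setID B). Qed.

Lemma u_mono (R : realFieldType) (G : finType) (u : {set G} -> R)
  (nn : nonneg_util u) (ad : additive_util u) (A B : {set G}) :
  A \subset B -> u A <= u B.
Proof.
move=> sAB; rewrite (u_split ad B A).
have -> : B :&: A = A by apply/setIidPr.
by rewrite lerDl.
Qed.

Lemma part_min_le (R : realFieldType) (G : finType) (c : nat) (u : {set G} -> R)
  (P : {ffun G -> 'I_c}) j : part_min u P <= u (bundle P j).
Proof. exact: bigmin_le. Qed.

Lemma part_min_ge0 (R : realFieldType) (G : finType) (c : nat) (u : {set G} -> R)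
  (nn : nonneg_util u) (P : {ffun G -> 'I_c}) : 0 <= part_min u P.
Proof. by apply: le_bigmin => //. Qed.

Lemma MMS_le (R : realFieldType) (G : finType) (c : nat) (u : {set G} -> R) x :
  0 <= x -> (forall P : {ffun G -> 'I_c}, part_min u P <= x) -> MMS c u <= x.
Proof. by move=> h0 h; apply: bigmax_le. Qed.

Lemma MMS_ge (R : realFieldType) (G : finType) (c : nat) (u : {set G} -> R)
  (P : {ffun G -> 'I_c}) : part_min u P <= MMS c u.
Proof. exact: (le_bigmax _ (fun P => part_min u P)). Qed.

Lemma u_parts (R : realFieldType) (G : finType) (c : nat) (u : {set G} -> R)
  (ad : additive_util u) (P : {ffun G -> 'I_c}) (J : {set 'I_c}) :
  \sum_(j in J) u (bundle P j) = u [set g | P g \in J].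
Proof.
rewrite ad (partition_big P (mem J)); last by move=> g; rewrite inE.
apply: eq_bigr => j jJ; rewrite ad; apply: eq_bigl => g.
rewrite /bundle !inE; case: (P g =P j) => [->|]; by rewrite ?jJ ?andbF.
Qed.

Lemma key_bound (R : realFieldType) (G : finType) (c : nat) (u : {set G} -> R)
  (nn : nonneg_util u) (ad : additive_util u) (P : {ffun G -> 'I_c}) (C : {set G}) :
  (c - #|C|)%:R * part_min u P <= u (~: C).
Proof.
set J := [set j | [disjoint bundle P j & C]].
have hJ : (c - #|C| <= #|J|)%N.
  have hsub : ~: J \subset P @: C.
    apply/subsetP => j; rewrite !inE => /pred0Pn [g /andP [gj gC]].
    apply/imsetP; exists g => //; move: gj => /=; rewrite /bundle inE => /eqP -> //.
  have h1 := cardsC J; rewrite card_ord in h1.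
  have h2 := subset_leq_card hsub; have h3 := leq_imset_card P C. lia.
apply: (@le_trans _ _ (#|J|%:R * part_min u P)).
  by apply: ler_wpM2r; [exact: part_min_ge0 | rewrite ler_nat].
apply: (@le_trans _ _ (\sum_(j in J) u (bundle P j))).
  rewrite mulr_natl -sumr_const.
  by apply: ler_sum => j _; exact: part_min_le.
rewrite u_parts //; apply: u_mono => //.
apply/subsetP => g; rewrite !inE => /pred0P h; apply/negP => gC.
by have := h g; rewrite /= !inE eqxx gC.
Qed.

Lemma part_ab (R : realFieldType) (k : nat) (hk : (2 <= k)%N) (G : finType)
  (u : {set G} -> R) (A : {ffun G -> 'I_k}) (i : 'I_k) :
  nonneg_util u -> additive_util u -> PROPc u A i k.-1 ->
  frac_MMS_fair u A i (k%:R^-1) /\ one_out_of_MMS_fair u A i (2 * k - 1).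
Proof.
move=> nn ad [C [_ hC hP]].
have k0 : (0 : R) < k%:R by rewrite ltr0n; lia.
split.
  rewrite /frac_MMS_fair; apply: le_trans hP.
  apply: ler_wpM2l; first by rewrite invr_ge0 ltW.
  apply: MMS_le => [|P]; first exact: nn.
  apply: le_trans (key_bound nn ad P C).
  apply: ler_peMl; first exact: part_min_ge0.
  rewrite ler1n; lia.
rewrite /one_out_of_MMS_fair; apply: MMS_le => [|P]; first exact: nn.
apply: le_trans hP; rewrite ler_pdivlMl //.
apply: le_trans (key_bound nn ad P C).
apply: ler_wpM2r; first exact: part_min_ge0.
rewrite ler_nat; lia.
Qed.

Definition valued (R : realFieldType) (G : finType) (u : {set G} -> R) :=
  [set g | u [set g] == 1].

Lemma bin_card (R : realFieldType) (G : finType) (u : {set G} -> R) :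
  binary_util u -> forall X, u X = #|X :&: valued u|%:R.
Proof.
move=> [ad b] X; rewrite ad (big_setID (valued u)) /= [X in _ + X]big1; last first.
  move=> g; rewrite !inE => /andP [h _].
  by case: (b g) => e //; rewrite e eqxx in h.
rewrite addr0 (eq_bigr (fun _ => 1)); last first.
  by move=> g; rewrite !inE => /andP [_ /eqP].
by rewrite sumr_const.
Qed.

Lemma bin_nn (R : realFieldType) (G : finType) (u : {set G} -> R) :
  binary_util u -> nonneg_util u.
Proof. by move=> hb X; rewrite (bin_card hb) ler0n. Qed.

Lemma part_min_nat (R : realFieldType) (G : finType) (c : nat) (u : {set G} -> R)
  (hb : binary_util u) (P : {ffun G -> 'I_c}) : exists p : nat, part_min u P = p%:R.
Proof.
rewrite /part_min; apply: (big_ind (fun x => exists p : nat, x = p%:R)).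
- by rewrite (bin_card hb); eexists.
- move=> x y [p ->] [q ->]; case: leP => _; by eexists.
- by move=> j _; rewrite (bin_card hb); eexists.
Qed.

Lemma uC (R : realFieldType) (G : finType) (u : {set G} -> R)
  (ad : additive_util u) (C : {set G}) : u setT = u (~: C) + u C.
Proof. by rewrite (u_split ad setT (~: C)) setTI setTD setCK. Qed.

Lemma part_c (R : realFieldType) (k : nat) (hk : (2 <= k)%N) (G : finType)
  (u : {set G} -> R) (A : {ffun G -> 'I_k}) (i : 'I_k) :
  binary_util u -> PROPc u A i k.-1 -> MMS_fair u A i.
Proof.
move=> hb [C [_ hC hP]].
have nn := bin_nn hb; have ad := hb.1.
have k0 : (0 : R) < k%:R by rewrite ltr0n; lia.
rewrite /MMS_fair; apply: MMS_le => [|P]; first exact: nn.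
have [p hp] := part_min_nat hb P.
have h1 := key_bound nn ad P set0.
rewrite setC0 cards0 subn0 hp -natrM (bin_card hb) ler_nat in h1.
have h2 := uC ad C.
rewrite !(bin_card hb) -natrD in h2; move/eqP: h2; rewrite eqr_nat => /eqP h2.
have h3 : (#|C :&: valued u| <= #|C|)%N by apply: subset_leq_card; apply: subsetIl.
move: hP; rewrite ler_pdivrMl // !(bin_card hb) -natrM ler_nat => h4.
rewrite hp ler_nat.
set n := #|[set: G] :&: valued u| in h1 h2.
set q := #|~: C :&: valued u| in h2 h4.
set a := #|bundle A i :&: valued u| in h4 *.
have kp : (0 < k)%N by lia.
rewrite -ltnS -(ltn_pmul2l kp); lia.
Qed.

Lemma sub_card (T : finType) (W : {set T}) (m : nat) :
  (m <= #|W|)%N -> exists C : {set T}, C \subset W /\ #|C| = m.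
Proof.
elim: m => [|m IH] hm; first by exists set0; rewrite sub0set cards0.
have [C [sCW hC]] := IH (ltnW hm).
have : W :\: C != set0.
  rewrite -card_gt0; have := cardsD W C; have -> : W :&: C = C by apply/setIidPr.
  lia.
case/set0Pn => x; rewrite inE => /andP [xC xW].
exists (x |: C); split; first by rewrite subUset sub1set xW.
by rewrite cardsU1 xC hC.
Qed.

Lemma MMS_floor (R : realFieldType) (k : nat) (hk : (2 <= k)%N) (G : finType)
  (u : {set G} -> R) : binary_util u ->
  ((#|valued u| %/ k)%:R <= MMS k u).
Proof.
move=> hb; have kp : (0 < k)%N by lia.
set V := valued u; set n := #|V|; set m := (n %/ k)%N.
pose P : {ffun G -> 'I_k} := [ffun g => Ordinal (ltn_pmod (index g (enum V)) kp)].
apply: le_trans (MMS_ge u P); apply: le_bigmin.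
  by rewrite (bin_card hb) setTI ler_nat leq_div.
move=> r _; rewrite (bin_card hb) ler_nat.
case: (posnP m) => [-> //|m0].
have nV : (0 < n)%N by apply: leq_trans m0 (leq_div _ _).
have [g0 _] : exists g0, g0 \in V by apply/set0Pn; rewrite -card_gt0.
pose f := fun t : 'I_m => nth g0 (enum V) (r + k * t).
have hkm : (k * m <= n)%N by rewrite mulnC leq_trunc_div.
have lt : forall t : 'I_m, (r + k * t < size (enum V))%N.
  move=> t; rewrite -cardE; have := ltn_ord t; have := ltn_ord r.
  move=> h1 h2; apply: leq_trans hkm; nia.
have finj : injective f.
  move=> t1 t2 e; apply: val_inj => /=.
  have := congr1 (fun x => index x (enum V)) e; rewrite /f.
  rewrite !index_uniq ?enum_uniq ?lt //.
  move=> h; have : (k * t1 = k * t2)%N by lia.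
  by move/eqP; rewrite eqn_pmul2l // => /eqP.
have <- : #|[set f t | t in 'I_m]| = m by rewrite card_imset // card_ord.
apply: subset_leq_card; apply/subsetP => g /imsetP [t _ ->].
have fV : f t \in V by rewrite -mem_enum; apply: mem_nth; exact: lt.
rewrite inE fV andbT /bundle inE ffunE; apply/eqP; apply: val_inj => /=.
rewrite /f index_uniq ?enum_uniq ?lt // addnC mulnC modnMDl modn_small //.
Qed.

Lemma part_c_conv (R : realFieldType) (k : nat) (hk : (2 <= k)%N) (G : finType)
  (u : {set G} -> R) (A : {ffun G -> 'I_k}) (i : 'I_k) :
  binary_util u -> MMS_fair u A i -> PROPc u A i k.-1.
Proof.
move=> hb hM; have ad := hb.1; have kp : (0 < k)%N by lia.
have k0 : (0 : R) < k%:R by rewrite ltr0n.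
set V := valued u.
have hf := le_trans (MMS_floor hk hb) hM.
rewrite (bin_card hb) ler_nat in hf.
set W := ~: bundle A i :&: V.
have hn := uC ad (~: bundle A i); rewrite setCK !(bin_card hb) -natrD in hn.
move/eqP: hn; rewrite eqr_nat setTI => /eqP hn.
have [C [sCW hC]] := sub_card (geq_minl #|W| k.-1).
have sCV : C \subset V by apply: subset_trans sCW (subsetIr _ _).
exists C; split.
- by apply: subset_trans sCW (subsetIl _ _).
- by rewrite hC geq_minr.
have h2 := uC ad C; rewrite !(bin_card hb) -natrD setTI in h2.
move/eqP: h2; rewrite eqr_nat => /eqP h2.
have eC : C :&: V = C by apply/setIidPl.
rewrite eC in h2.
rewrite ler_pdivrMl // !(bin_card hb) -natrM ler_nat.
have hw : #|W| = #|~: bundle A i :&: valued u| by [].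
have := ltn_ceil #|valued u| kp.
move: h2 hn hf hC hw.
set n := #|valued u|; set a := #|bundle A i :&: valued u|; set w := #|W|.
set w' := #|~: bundle A i :&: valued u|.
set q := #|~: C :&: valued u|; set c := #|C|; set d := (n %/ k)%N.
move=> h2 h3 h4 h5 h6 h1.
case: (leqP w k.-1) => hw'.
  move: h5; rewrite (minn_idPl hw') => h5. nia.
move: h5; rewrite (minn_idPr (ltnW hw')) => h5.
have : (n < k * a.+1)%N.
  apply: leq_trans h1 _; rewrite mulnC leq_mul2l; apply/orP; right; lia.
lia.
Qed.

Lemma sum_ind (R : realFieldType) (G : finType) (X S : {set G}) :
  \sum_(g in X) ((g \in S)%:R : R) = #|X :&: S|%:R.
Proof.
rewrite (big_setID S) /= [X in _ + X]big1; last first.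
  by move=> g; rewrite !inE => /andP [/negbTE -> _].
rewrite addr0 (eq_bigr (fun _ => 1)); last first.
  by move=> g; rewrite !inE => /andP [_ ->].
by rewrite sumr_const.
Qed.


Definition exw (R : realFieldType) (k s : nat) (g : ('I_k * option 'I_s)%type) : R :=
  if g.2 is Some _ then 1 else if val g.1 == 0%N then 0 else k%:R.

Definition exu (R : realFieldType) (k s : nat) (X : {set ('I_k * option 'I_s)%type}) : R :=
  \sum_(g in X) exw R g.

Definition Small (k s : nat) : {set ('I_k * option 'I_s)%type} := [set g | g.2 != None].
Definition Big (k s : nat) : {set ('I_k * option 'I_s)%type} :=
  [set g | (g.2 == None) && (val g.1 != 0%N)].

Lemma exu_formula (R : realFieldType) (k s : nat) X :
  exu R X = #|X :&: Small k s|%:R + k%:R * #|X :&: Big k s|%:R.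
Proof.
rewrite /exu -!sum_ind mulr_sumr -big_split /=; apply: eq_bigr => [[j o]] _.
rewrite /exw !inE /=; case: o => [t|] /=; first by rewrite mulr0 addr0.
by case: eqP => _ /=; rewrite ?mulr0 ?mulr1 add0r.
Qed.

Lemma exu_nn (R : realFieldType) (k s : nat) : nonneg_util (@exu R k s).
Proof.
move=> X; apply: sumr_ge0 => [[j o]] _; rewrite /exw.
by case: o => //; case: eqP => _ //; rewrite ler0n.
Qed.

Lemma exu_ad (R : realFieldType) (k s : nat) : additive_util (@exu R k s).
Proof. by move=> X; rewrite /exu; apply: eq_bigr => g _; rewrite big_set1. Qed.

Lemma card_Small (k s : nat) : #|Small k s| = (k * s)%N.
Proof.
have -> : Small k s = setX setT [set~ None].
  by apply/setP => [[j o]]; rewrite !inE.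
by rewrite cardsX cardsT card_ord cardsC1 card_option card_ord.
Qed.

Lemma card_Big (k s : nat) (kp : (0 < k)%N) : #|Big k s| = k.-1.
Proof.
have -> : Big k s = setX [set~ Ordinal kp] [set None].
  apply/setP => [[j o]]; rewrite !inE /= andbC; congr (_ && _).
by rewrite cardsX cardsC1 card_ord cards1 muln1.
Qed.

Definition exA (k s : nat) : {ffun ('I_k * option 'I_s)%type -> 'I_k} := [ffun g => g.1].

Lemma card_bS (k s : nat) (j : 'I_k) : #|bundle (exA k s) j :&: Small k s| = s.
Proof.
have -> : bundle (exA k s) j :&: Small k s = setX [set j] [set~ None].
  by apply/setP => [[j' o]]; rewrite /bundle !inE ffunE.
by rewrite cardsX cards1 cardsC1 card_option card_ord mul1n.
Qed.

Lemma bB0 (k s : nat) (kp : (0 < k)%N) : bundle (exA k s) (Ordinal kp) :&: Big k s = set0.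
Proof.
apply/setP => [[j o]]; rewrite /bundle !inE ffunE /=.
by case: eqP => // ->; rewrite andbF.
Qed.

Lemma u_i0 (R : realFieldType) (k s : nat) (kp : (0 < k)%N) :
  exu R (bundle (exA k s) (Ordinal kp)) = s%:R.
Proof. by rewrite exu_formula card_bS bB0 cards0 mulr0 addr0. Qed.

Lemma ex_EF1 (R : realFieldType) (k s : nat) (kp : (0 < k)%N) :
  EFc (@exu R k s) (exA k s) (Ordinal kp) 1.
Proof.
move=> i'; exists (bundle (exA k s) i' :&: Big k s); split.
- exact: subsetIl.
- have hs : bundle (exA k s) i' :&: Big k s \subset [set (i', None)].
    apply/subsetP => [[j o]]; rewrite /bundle !inE ffunE /=.
    by case/andP => /eqP -> /andP [/eqP -> _].
  by have := subset_leq_card hs; rewrite cards1.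
- rewrite u_i0 exu_formula.
  have -> : (bundle (exA k s) i' :\: (bundle (exA k s) i' :&: Big k s)) :&: Big k s = set0.
    apply/setP => g; rewrite in_set0 !in_setI in_setD in_setI.
    by case: (g \in bundle (exA k s) i'); case: (g \in Big k s).
  have -> : (bundle (exA k s) i' :\: (bundle (exA k s) i' :&: Big k s)) :&: Small k s
          = bundle (exA k s) i' :&: Small k s.
    apply/setP => g; rewrite !in_setI in_setD in_setI.
    case: (g \in bundle (exA k s) i') => //=.
    by rewrite andbT; case: g => j [t|]; rewrite /Small /Big !inE /= ?andbF.
  by rewrite card_bS cards0 mulr0 addr0.
Qed.

Lemma ex_PROP (R : realFieldType) (k s : nat) (kp : (0 < k)%N) :
  PROPc (@exu R k s) (exA k s) (Ordinal kp) k.-1.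
Proof.
exists (Big k s); split.
- apply/subsetP => [[j o]]; rewrite /bundle !inE ffunE /= => /andP [_ h].
  by apply/negP => /eqP e; rewrite e eqxx in h.
- by rewrite card_Big.
rewrite u_i0 exu_formula [~: Big k s :&: Big k s]setIC setICr cards0 mulr0 addr0.
have -> : ~: Big k s :&: Small k s = Small k s.
  apply/setIidPr/subsetP => [[j o]]; rewrite !inE; by case: o.
rewrite card_Small natrM mulrA mulVf ?mul1r // pnatr_eq0; lia.
Qed.

Lemma exu1 (R : realFieldType) (k s : nat) g : exu R [set g] = exw R (k:=k) (s:=s) g.
Proof. by rewrite /exu big_set1. Qed.

Lemma exu_T (R : realFieldType) (k s : nat) (kp : (0 < k)%N) :
  exu R [set: ('I_k * option 'I_s)%type] = (k * s + k * k.-1)%N%:R.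
Proof. by rewrite exu_formula !setTI card_Small card_Big // natrD !natrM. Qed.

Lemma exu_Small_ge (R : realFieldType) (k s : nat) (Y : {set ('I_k * option 'I_s)%type}) :
  Small k s \subset Y -> (k * s)%:R <= exu R Y.
Proof.
move=> h; apply: le_trans (u_mono (@exu_nn R k s) (@exu_ad R k s) h).
rewrite exu_formula setIid card_Small lerDl; exact: mulr_ge0.
Qed.

Lemma exu_big_ge (R : realFieldType) (k s : nat) (Y : {set ('I_k * option 'I_s)%type}) j :
  val j != 0%N -> (j, None) \in Y -> k%:R <= exu R Y.
Proof.
move=> hj hY; have h : [set (j, None)] \subset Y by rewrite sub1set.
apply: le_trans (u_mono (@exu_nn R k s) (@exu_ad R k s) h).
by rewrite exu1 /exw /= (negbTE hj).
Qed.

Lemma ex_a (R : realFieldType) (k : nat) (kp : (0 < k)%N) :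
  MMS k (@exu R k 1) = k%:R.
Proof.
have k0 : (0 : R) < k%:R by rewrite ltr0n.
apply/le_anti/andP; split.
  apply: MMS_le => [|P]; first exact: ltW.
  have := key_bound (@exu_nn R k 1) (@exu_ad R k 1) P set0.
  rewrite setC0 cards0 subn0 exu_T // muln1 -mulnS prednK // natrM.
  by rewrite ler_pM2l.
pose P0 : {ffun ('I_k * option 'I_1)%type -> 'I_k} :=
  [ffun g => if g.2 is Some _ then Ordinal kp else g.1].
apply: le_trans (MMS_ge _ P0); apply: le_bigmin.
  by rewrite exu_T // ler_nat; nia.
move=> r _; case: (eqVneq r (Ordinal kp)) => [->|hr].
  rewrite -[k in k%:R]muln1; apply: exu_Small_ge.
  by apply/subsetP => [[j [t|]]]; rewrite /bundle !inE ffunE.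
apply: (@exu_big_ge _ _ _ _ r).
  by apply: contra hr => h; apply/eqP/val_inj; apply/eqP.
by rewrite /bundle inE ffunE.
Qed.

Lemma ex_b (R : realFieldType) (k : nat) (hk : (2 <= k)%N) :
  k%:R <= MMS (2 * k - 2) (@exu R k k.-1).
Proof.
have kp : (0 < k)%N by lia.
have d0 : (0 < 2 * k - 2)%N by lia.
have t0 : (0 < k.-1)%N by lia.
pose d := Ordinal d0.
pose P1 : {ffun ('I_k * option 'I_k.-1)%type -> 'I_(2 * k - 2)} :=
  [ffun g : ('I_k * option 'I_k.-1)%type =>
    (insubd d (if g.2 is Some t then (k.-1 + t)%N else (val g.1).-1) : 'I_(2 * k - 2))].
apply: le_trans (MMS_ge _ P1); apply: le_bigmin.
  by rewrite exu_T // ler_nat; nia.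
move=> r _; case: (ltnP r k.-1) => hr.
  have hj : (r.+1 < k)%N by lia.
  apply: (@exu_big_ge _ _ _ _ (Ordinal hj)) => //.
  rewrite /bundle inE ffunE /=; apply/eqP/val_inj.
  by rewrite val_insubd /= ltn_ord.
have ht : (r - k.-1 < k.-1)%N by have := ltn_ord r; lia.
pose t := Ordinal ht.
have hX : [set g : ('I_k * option 'I_k.-1)%type | g.2 == Some t] \subset bundle P1 r.
  apply/subsetP => [[j o]]; rewrite /bundle !inE ffunE /= => /eqP ->.
  apply/eqP/val_inj; rewrite val_insubd /=.
  have -> : (k.-1 + (r - k.-1) = r)%N by lia.
  by rewrite ltn_ord.
apply: le_trans (u_mono (@exu_nn R k k.-1) (@exu_ad R k k.-1) hX).
rewrite exu_formula.
have -> : [set g : ('I_k * option 'I_k.-1)%type | g.2 == Some t] :&: Small k k.-1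
        = setX setT [set Some t].
  by apply/setP => [[j o]]; rewrite !inE; case: eqP => // ->.
rewrite cardsX cardsT card_ord cards1 muln1 ler_wpDr //.
exact: mulr_ge0.
Qed.

Unset Implicit Arguments.

Theorem mainTheorem2 (R : realFieldType) (k : nat) (hk : (2 <= k)%N) :
  (forall (G : finType) (u : {set G} -> R) (A : {ffun G -> 'I_k}) (i : 'I_k),
     nonneg_util u -> additive_util u -> PROPc u A i k.-1 ->
     [/\ frac_MMS_fair u A i (k%:R^-1),
         one_out_of_MMS_fair u A i (2 * k - 1) &
         (binary_util u -> MMS_fair u A i)])
  /\ (exists (G : finType) (u : {set G} -> R) (A : {ffun G -> 'I_k}) (i : 'I_k),
        [/\ nonneg_util u, additive_util u, EFc u A i 1, PROPc u A i k.-1 &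
            0 < MMS k u /\ u (bundle A i) = k%:R^-1 * MMS k u])
  /\ (exists (G : finType) (u : {set G} -> R) (A : {ffun G -> 'I_k}) (i : 'I_k),
        [/\ nonneg_util u, additive_util u, EFc u A i 1, PROPc u A i k.-1 &
            ~ one_out_of_MMS_fair u A i (2 * k - 2)])
  /\ (forall (G : finType) (u : {set G} -> R) (A : {ffun G -> 'I_k}) (i : 'I_k),
        binary_util u -> MMS_fair u A i -> PROPc u A i k.-1).
Proof.
have kp : (0 < k)%N by lia.
split; [|split; [|split]].
- move=> G u A i nn ad hP; have [h1 h2] := part_ab hk nn ad hP.
  split; [exact: h1 | exact: h2 | move=> hb; exact: (part_c hk hb hP)].
- exists _, (@exu R k 1), (exA k 1), (Ordinal kp).
  split; [exact: exu_nn | exact: exu_ad | exact: ex_EF1 | exact: ex_PROP |].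
  rewrite ex_a // u_i0 mulVf ?ltr0n // pnatr_eq0; lia.
- exists _, (@exu R k k.-1), (exA k k.-1), (Ordinal kp).
  split; [exact: exu_nn | exact: exu_ad | exact: ex_EF1 | exact: ex_PROP |].
  rewrite /one_out_of_MMS_fair u_i0 => h.
  have := le_trans (ex_b R hk) h; rewrite ler_nat; lia.
- move=> G u A i hb hM; exact: (part_c_conv hk hb hM).
Qed.
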